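(* Let $v$ be an aperiodic infinite word over $\{0,1\}$ such that $\Phi_{\mathbb{R}}(v)$ exists, and for $\ell\ge1$ let $u^{(\ell)}$ be its prefix of length $\ell$. Then $$\lim_{\ell\to\infty}C_{\mathbb{R}}(u^{(\ell)})=\Phi_{\mathbb{R}}(v).$$
   Context: For a finite $0$-$1$ word $u$ of length $\ell\ge1$ and height $h$ (number of $1$'s) with $1$'s at positions $d_0<\dots<d_{h-1}$, let $\varphi(u)=\sum_{i=0}^{h-1}3^{h-1-i}2^{d_i}$ and $C_{\mathbb{R}}(u)=\varphi(u)/(2^\ell-3^h)\in\mathbb{Q}$. For an infinite word $v$ with $1$'s at positions $d_0<d_1<\cdots$, $\Phi_{\mathbb{R}}(v)=-\sum_{i\ge0}2^{d_i}/3^{i+1}$, said to exist if the series converges in $\mathbb{R}$. *)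

(* Defs.v *)
From HB Require Import structures.
From mathcomp Require Import all_boot all_order all_algebra.
From mathcomp Require Import all_classical all_reals all_analysis.
Set Implicit Arguments. Unset Strict Implicit. Unset Printing Implicit Defensive.
Import Order.TTheory GRing.Theory Num.Theory.
Local Open Scope ring_scope.

(* A finite 0-1 word is a seq bool (true = 1); an infinite word is nat -> bool.
   Positions are numbered from 0. *)

Definition ones_pos (u : seq bool) : seq nat :=
  [seq i <- iota 0 (size u) | nth false u i].

Definition height (u : seq bool) : nat := size (ones_pos u).

Definition phi (u : seq bool) : nat :=
  (\sum_(i < height u) 3 ^ (height u - 1 - i) * 2 ^ (nth 0 (ones_pos u) i))%N.

Definition C_R {R : realType} (u : seq bool) : R :=
  (phi u)%:R / (2 ^+ size u - 3 ^+ height u).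

Definition word_prefix (v : nat -> bool) (l : nat) : seq bool := mkseq v l.

Definition enum_ones (v : nat -> bool) (d : nat -> nat) : Prop :=
  (forall i, (d i < d i.+1)%N) /\ (forall n, v n = true <-> exists i, d i = n).

Definition eventually_periodic (v : nat -> bool) : Prop :=
  exists p N : nat, (0 < p)%N /\ forall n, (N <= n)%N -> v (n + p) = v n.

Definition aperiodic (v : nat -> bool) : Prop := ~ eventually_periodic v.

(* general term of the series Phi_R(v) = - sum_i 2^(d_i) / 3^(i+1) *)
Definition Phi_term {R : realType} (d : nat -> nat) (i : nat) : R :=
  - (2 ^+ d i / 3 ^+ i.+1).

(* Main.v *)
Require Import Defs.
From HB Require Import structures.
From mathcomp Require Import all_boot all_order all_algebra.
From mathcomp Require Import all_classical all_reals all_analysis.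
From mathcomp Require Import zify.
Import Order.TTheory GRing.Theory Num.Theory numFieldNormedType.Exports.
Local Open Scope classical_set_scope.
Local Open Scope ring_scope.

Lemma d_mono {d : nat -> nat} : (forall i, (d i < d i.+1)%N) ->
  forall i j, (i < j)%N -> (d i < d j)%N.
Proof.
move=> H i j; elim: j => [//|j IH]; rewrite ltnS leq_eqVlt => /orP[/eqP->//|].
by move/IH => h; apply: ltn_trans h (H j).
Qed.

Definition P (v : nat -> bool) l := [seq i <- iota 0 l | v i].

Lemma ones_pos_prefix v l : ones_pos (word_prefix v l) = P v l.
Proof.
rewrite /ones_pos /word_prefix size_mkseq /P; apply: eq_in_filter => i.
by rewrite mem_iota add0n => /andP[_ hi]; rewrite nth_mkseq.
Qed.

Lemma P_inv {v d} : enum_ones v d -> forall l,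
  P v l = map d (iota 0 (size (P v l))) /\ (l <= d (size (P v l)))%N.
Proof.
move=> [Hd Hv]; elim=> [|l [IH1 IH2]]; first by [].
have PS : P v l.+1 = P v l ++ (if v l then [:: l] else [::]).
  by rewrite /P -addn1 iotaD filter_cat /= add0n; case: (v l).
set k := size (P v l) in IH1 IH2.
case E: (v l).
- have [j Hj] := (proj1 (Hv l) E).
  have jk : j = k.
    apply/eqP; rewrite eqn_leq; apply/andP; split.
      rewrite leqNgt; apply/negP => /(d_mono Hd _ _); by rewrite Hj ltnNge IH2.
    rewrite leqNgt; apply/negP => jk.
    have : d j \in P v l by rewrite IH1; apply: map_f; rewrite mem_iota add0n jk.
    by rewrite Hj /P mem_filter mem_iota add0n ltnn !andbF.
  subst j; rewrite PS E size_cat /= addn1 -/k; split.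
    by rewrite -addn1 iotaD map_cat -IH1 /= add0n Hj.
  by rewrite -Hj; apply: Hd.
- rewrite PS E cats0; split=> //.
  rewrite ltn_neqAle IH2 andbT; apply/negP => /eqP h.
  have : v (d k) by apply/(Hv (d k)); exists k.
  by rewrite -h E.
Qed.

Lemma P_nth {v d} : enum_ones v d -> forall l i, (i < size (P v l))%N ->
  nth 0%N (P v l) i = d i.
Proof.
move=> H l i hi; have [h1 _] := P_inv H l.
by rewrite h1 (nth_map 0%N) ?size_iota // nth_iota.
Qed.

Lemma P_big {v d} : enum_ones v d -> forall k l, (d k < l)%N -> (k < size (P v l))%N.
Proof.
move=> H k l hl; have [_ h2] := P_inv H l.
rewrite ltnNge; apply/negP => hk.
have : (d (size (P v l)) <= d k)%N.
  move: hk; rewrite leq_eqVlt => /orP[/eqP->//|/(d_mono (proj1 H) _ _)]; apply: ltnW.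
lia.
Qed.

Section Real.
Variables (R : realType) (v : nat -> bool) (d : nat -> nat).
Hypothesis Hen : enum_ones v d.

Let h l := size (P v l).
Let t i : R := 2 ^+ d i / 3 ^+ i.+1.
Let S n : R := \sum_(i < n) t i.

Lemma height_pref l : height (word_prefix v l) = h l.
Proof. by rewrite /height ones_pos_prefix. Qed.

Lemma phiE l : ((phi (word_prefix v l))%:R : R) = 3 ^+ h l * S (h l).
Proof.
rewrite /phi height_pref natr_sum /S mulr_sumr; apply: eq_bigr => i _.
rewrite ones_pos_prefix (P_nth Hen) // natrM !natrX /t.
have e : (3:R) ^+ h l = 3 ^+ (h l - 1 - i) * 3 ^+ i.+1.
  by rewrite -exprD; congr (_ ^+ _); have := ltn_ord i; lia.
by rewrite e -mulrA [_ * (_ / _)]mulrC divfK // expf_neq0.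
Qed.

Lemma CE l : @C_R R (word_prefix v l) = - S (h l) / (1 - 2 ^+ l / 3 ^+ h l).
Proof.
rewrite /C_R phiE height_pref size_mkseq.
have h3 : (3 ^+ h l : R) != 0 by rewrite expf_neq0.
have -> : 1 - 2 ^+ l / 3 ^+ h l = (3 ^+ h l - 2 ^+ l) / 3 ^+ h l :> R.
  by rewrite mulrBl divff.
by rewrite invf_div mulrA mulNr -mulrN -[X in _ = _ / X]opprB invrN mulrN mulrN mulNr opprK [S _ * _]mulrC.
Qed.

Lemma h_infty : h x @[x --> \oo] --> \oo.
Proof.
move=> A [N _ HA]; exists (d N).+1 => // l hl; apply: HA => /=.
by apply/ltnW/(P_big Hen).
Qed.


Lemma main_sec (Phi : R) : series (@Phi_term R d) @ \oo --> Phi ->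
  (fun l : nat => @C_R R (word_prefix v l)) @ \oo --> Phi.
Proof.
move=> HPhi.
have serE : series (@Phi_term R d) = fun n => - S n.
  by apply/funext => n; rewrite /series /= /S big_mkord sumrN.
have tc : t @ \oo --> 0.
  have := cvg_series_cvg_0 (cvgP _ HPhi).
  have -> : t = (fun i => - @Phi_term R d i) by apply/funext => i; rewrite opprK.
  by move=> X; rewrite -oppr0; apply: cvgN.
have Sc : (fun l => - S (h l)) @ \oo --> Phi.
  by apply: (cvg_comp h (fun n => - S n)) h_infty _; rewrite -serE.
have rc : (fun l => 2 ^+ l / 3 ^+ h l) @ \oo --> (0:R).
  apply: (@squeeze_cvgr _ _ _ _ (fun=> 0) (fun l => 3 * t (h l))).
  - apply: filterE => l; apply/andP; split.
      by rewrite divr_ge0 // exprn_ge0.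
    have e : 3 * t (h l) = 2 ^+ d (h l) / 3 ^+ h l.
      by rewrite /t exprS invfM mulrCA [3 * _]mulrA mulfV // mul1r.
    rewrite e ler_pM2r ?invr_gt0 ?exprn_gt0 //.
    rewrite ler_eXn2l // ?ltr1n //; exact: (proj2 (P_inv Hen l)).
  - exact: cvg_cst.
  - rewrite -(mulr0 3); apply: cvgM; first exact: cvg_cst.
    exact: (cvg_comp h t h_infty tc).
have rc' : (fun l => 1 - 2 ^+ l / 3 ^+ h l) @ \oo --> (1:R).
  by rewrite -[X in _ --> X]subr0; apply: cvgB => //; exact: cvg_cst.
have X := cvgM Sc (cvgV (oner_neq0 R) rc').
rewrite invr1 mulr1 in X.
have -> : (fun l => @C_R R (word_prefix v l)) = (fun l => - S (h l) / (1 - 2 ^+ l / 3 ^+ h l)).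
  by apply/funext => l; rewrite CE.
exact: X.
Qed.

End Real.

Theorem lemma32 (R : realType) (v : nat -> bool) (d : nat -> nat) (Phi : R) :
  aperiodic v -> enum_ones v d ->
  series (@Phi_term R d) @ \oo --> Phi ->
  (fun l : nat => @C_R R (word_prefix v l)) @ \oo --> Phi.
Proof. by move=> _ Hen; apply: main_sec. Qed.
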